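(* Let $\mathsf{A}=(A_1,A_2,A_3)\in GL_2(\mathbb{R})^3$ be such that $A_3=cI$ for some $c\in\mathbb{R}\setminus\{0\}$ and $(A_1,A_2)$ is irreducible and dominated. Then for every H\''older continuous potential $f:\{1,2,3\}^{\mathbb{N}}\to\mathbb{R}$ and every $C>0$ there exist $\mathtt{i}\in\{1,2,3\}^{\mathbb{N}}$ and $n\in\mathbb{N}$ such that $\bigl|\sum_{k=0}^{n-1}f(\sigma^k\mathtt{i})-\log\|A_{\mathtt{i}|_n}\|\bigr|>C$.
   Context: $\|\cdot\|$ is the operator norm. $\sigma$ is the left shift on $\{1,2,3\}^{\mathbb{N}}$, $\mathtt{i}|_n$ the first $n$ symbols of $\mathtt{i}$, $\mathtt{i}\wedge\mathtt{j}$ the longest common prefix, $A_{i_1\cdots i_n}=A_{i_1}\cdots A_{i_n}$. A potential $f$ is H\''older continuous if $|f(\mathtt{i})-f(\mathtt{j})|\le K\tau^{|\mathtt{i}\wedge\mathtt{j}|}$ for some $K>0$, $0<\tau<1$. $(A_1,A_2)$ is irreducible if no 1-dimensional subspace is invariant under both $A_1$ and $A_2$; it is dominated if there exist $K>0$ and $0<\tau<1$ with $|\det(B_1\cdots B_n)|/\|B_1\cdots B_n\|^2\le K\tau^n$ for all $n$ and all $B_1,\dots,B_n\in\{A_1,A_2\}$. *)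

(* Defs.v *)
From HB Require Import structures.
From mathcomp Require Import all_boot all_order all_algebra.
From mathcomp Require Import classical_sets reals exp.
Set Implicit Arguments. Unset Strict Implicit. Unset Printing Implicit Defensive.
Import Order.TTheory GRing.Theory Num.Theory.
Local Open Scope ring_scope.
Local Open Scope classical_set_scope.

Definition vnorm {R : realType} (v : 'cV[R]_2) : R :=
  Num.sqrt (\sum_(i < 2) v i 0 ^+ 2).

Definition opnorm {R : realType} (A : 'M[R]_2) : R :=
  sup [set vnorm (A *m v) | v in [set v : 'cV[R]_2 | vnorm v = 1]].

(* symbolic sequences in {1,2,3}^N, symbols encoded as 'I_3 = {0,1,2} *)
Definition shiftk (k : nat) (i : nat -> 'I_3) : nat -> 'I_3 := fun m => i (m + k)%N.

Definition word_prod {R : realType} (A : 'I_3 -> 'M[R]_2) (i : nat -> 'I_3) (n : nat)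
  : 'M[R]_2 := \prod_(k < n) A (i k).

Definition birkhoff {R : realType} (f : (nat -> 'I_3) -> R) (i : nat -> 'I_3) (n : nat) : R :=
  \sum_(k < n) f (shiftk k i).

(* Hölder continuity: |f i - f j| <= K tau^{|i ^ j|}; stated as: whenever i, j
   agree on their first n symbols (i.e. |i ^ j| >= n), |f i - f j| <= K tau^n. *)
Definition holder {R : realType} (f : (nat -> 'I_3) -> R) : Prop :=
  exists K tau : R, 0 < K /\ 0 < tau /\ tau < 1 /\
    forall (i j : nat -> 'I_3) (n : nat),
      (forall m, (m < n)%N -> i m = j m) -> `|f i - f j| <= K * tau ^+ n.

Definition irreducible_pair {R : realType} (A1 A2 : 'M[R]_2) : Prop :=
  ~ exists v : 'cV[R]_2, v != 0 /\
      (exists a : R, A1 *m v = a *: v) /\ (exists b : R, A2 *m v = b *: v).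

Definition dominated_pair {R : realType} (A1 A2 : 'M[R]_2) : Prop :=
  exists K tau : R, 0 < K /\ 0 < tau /\ tau < 1 /\
    forall (n : nat) (w : 'I_n -> bool),
      let P := \prod_(k < n) (if w k then A1 else A2) in
      `|\det P| / (opnorm P) ^+ 2 <= K * tau ^+ n.

Definition sym1 : 'I_3 := @Ordinal 3 0 isT.
Definition sym2 : 'I_3 := @Ordinal 3 1 isT.
Definition sym3 : 'I_3 := @Ordinal 3 2 isT.

(* Main.v *)
Require Import Defs.
From HB Require Import structures.
From mathcomp Require Import all_boot all_order all_algebra zify.
From mathcomp Require Import classical_sets reals exp boolp ring lra sequences.
Import Order.TTheory GRing.Theory Num.Theory.
Local Open Scope ring_scope.


Section Norms.
Context {R : realType}.
Implicit Types (A B : 'M[R]_2) (u v w : 'cV[R]_2).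

Definition i0 : 'I_2 := ord0.
Definition i1 : 'I_2 := ord_max.

Lemma sum2 (F : 'I_2 -> R) : \sum_(i < 2) F i = F i0 + F i1.
Proof. by rewrite !big_ord_recl big_ord0 addr0; congr (_ + F _); apply/val_inj. Qed.

Lemma ord2P (i : 'I_2) : i = i0 \/ i = i1.
Proof. case: i => [[|[|k]] Hk]; [left|right|by []]; exact/val_inj. Qed.

Lemma mulmx2E (m n : nat) (A : 'M[R]_(m,2)) (B : 'M[R]_(2,n)) i j :
  (A *m B) i j = A i i0 * B i0 j + A i i1 * B i1 j.
Proof. by rewrite mxE sum2. Qed.

Lemma vnormE v : vnorm v = Num.sqrt (v i0 0 ^+ 2 + v i1 0 ^+ 2).
Proof. by rewrite /vnorm sum2. Qed.

Lemma vnorm_ge0 v : 0 <= vnorm v.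
Proof. exact: sqrtr_ge0. Qed.

Lemma vnorm_sq v : vnorm v ^+ 2 = v i0 0 ^+ 2 + v i1 0 ^+ 2.
Proof. by rewrite vnormE sqr_sqrtr // addr_ge0 // sqr_ge0. Qed.

Lemma vnormZ a v : vnorm (a *: v) = `|a| * vnorm v.
Proof.
rewrite !vnormE !mxE !exprMn -mulrDr sqrtrM ?sqr_ge0 //.
by rewrite sqrtr_sqr.
Qed.

Lemma col_eq0 v : v i0 0 = 0 -> v i1 0 = 0 -> v = 0.
Proof.
move=> h0 h1; apply/matrixP => i j; rewrite mxE.
have -> : j = 0 by apply/val_inj; case: j => [[]].
by case: (ord2P i) => ->.
Qed.

Lemma vnorm_eq0 v : vnorm v = 0 -> v = 0.
Proof.
move=> h; have := vnorm_sq v; rewrite h expr0n /= => e.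
have a0 : v i0 0 = 0.
  apply/eqP; rewrite -sqrf_eq0; apply/eqP.
  have := sqr_ge0 (v i0 0); have := sqr_ge0 (v i1 0); lra.
have a1 : v i1 0 = 0.
  apply/eqP; rewrite -sqrf_eq0; apply/eqP.
  have := sqr_ge0 (v i0 0); have := sqr_ge0 (v i1 0); lra.
exact: col_eq0.
Qed.

Lemma vnormD u w : vnorm (u + w) <= vnorm u + vnorm w.
Proof.
rewrite -(ler_pXn2r (n:=2)) //; last 2 first.
- by rewrite nnegrE vnorm_ge0.
- by rewrite nnegrE addr_ge0 // vnorm_ge0.
have hu := vnorm_sq u; have hw := vnorm_sq w.
have gu := vnorm_ge0 u; have gw := vnorm_ge0 w.
rewrite vnorm_sq !mxE.
set a := u i0 0 in hu *; set b := u i1 0 in hu *.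
set c := w i0 0 in hw *; set d := w i1 0 in hw *.
set x := vnorm u in hu gu *; set y := vnorm w in hw gw *.
have cs : (a * c + b * d) <= x * y.
  have h2 : (a * c + b * d) ^+ 2 <= (x * y) ^+ 2.
    rewrite exprMn hu hw.
    have e : (a ^+ 2 + b ^+ 2) * (c ^+ 2 + d ^+ 2) - (a * c + b * d) ^+ 2 = (a * d - b * c) ^+ 2 by ring.
    by rewrite -subr_ge0 e sqr_ge0.
  have : `|a * c + b * d| <= x * y.
    rewrite -(ler_pXn2r (n:=2)) // ?nnegrE ?mulr_ge0 //.
    by rewrite real_normK // num_real.
  move=> h; apply: le_trans h; exact: ler_norm.
nra.
Qed.

Lemma vnorm_le_abs v : vnorm v <= `|v i0 0| + `|v i1 0|.
Proof.
rewrite -(ler_pXn2r (n:=2)) // ?nnegrE ?vnorm_ge0 ?addr_ge0 //.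
rewrite vnorm_sq -(real_normK (num_real (v i0 0))) -(real_normK (num_real (v i1 0))).
have := normr_ge0 (v i0 0); have := normr_ge0 (v i1 0). nra.
Qed.

Lemma abs_le_vnorm v (i : 'I_2) : `|v i 0| <= vnorm v.
Proof.
rewrite -(ler_pXn2r (n:=2)) // ?nnegrE ?vnorm_ge0 //.
rewrite vnorm_sq real_normK ?num_real //.
have := sqr_ge0 (v i0 0); have := sqr_ge0 (v i1 0).
by case: (ord2P i) => -> ; lra.
Qed.

Definition bnd A := `|A i0 i0| + `|A i0 i1| + `|A i1 i0| + `|A i1 i1|.

Lemma vnorm_mul_bnd A v : vnorm (A *m v) <= bnd A * vnorm v.
Proof.
apply: le_trans (vnorm_le_abs _) _.
rewrite !mulmx2E.
have h0 := abs_le_vnorm v i0; have h1 := abs_le_vnorm v i1.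
have n1 := normr_ge0 (A i0 i0); have n2 := normr_ge0 (A i0 i1).
have n3 := normr_ge0 (A i1 i0); have n4 := normr_ge0 (A i1 i1).
have t1 := ler_normD (A i0 i0 * v i0 0) (A i0 i1 * v i1 0).
have t2 := ler_normD (A i1 i0 * v i0 0) (A i1 i1 * v i1 0).
rewrite !normrM in t1 t2.
rewrite /bnd.
have := normr_ge0 (v i0 0); have := normr_ge0 (v i1 0).
nra.
Qed.

Definition nset A := image [set v : 'cV[R]_2 | vnorm v = 1] (fun v : 'cV[R]_2 => vnorm (A *m v)).

Definition e0 : 'cV[R]_2 := \col_i (if i == i0 then 1 else 0).
Definition e1 : 'cV[R]_2 := \col_i (if i == i1 then 1 else 0).

Lemma e0_unit : vnorm e0 = 1.
Proof. by rewrite vnormE !mxE /= expr0n /= expr1n addr0 sqrtr1. Qed.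
Lemma e1_unit : vnorm e1 = 1.
Proof. by rewrite vnormE !mxE /= expr0n /= expr1n add0r sqrtr1. Qed.

Lemma nset_sup A : has_sup (nset A).
Proof.
split; first by exists (vnorm (A *m e0)); exists e0 => //; exact: e0_unit.
exists (bnd A) => _ [v /= hv <-].
by have := vnorm_mul_bnd A v; rewrite hv mulr1.
Qed.

Lemma opnorm_ge A v : vnorm v = 1 -> vnorm (A *m v) <= opnorm A.
Proof. move=> hv; apply: (sup_upper_bound (nset_sup A)); by exists v. Qed.

Lemma opnorm_le A k : (forall v, vnorm v = 1 -> vnorm (A *m v) <= k) -> opnorm A <= k.
Proof.
move=> h; apply: ge_sup; first by case: (nset_sup A).
by move=> _ [v /= hv <-]; apply: h.
Qed.

Lemma opnorm_ge0 A : 0 <= opnorm A.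
Proof. exact: le_trans (vnorm_ge0 _) (opnorm_ge A e0 e0_unit). Qed.

Lemma opnorm_vec A v : vnorm (A *m v) <= opnorm A * vnorm v.
Proof.
have [v0|nz] := eqVneq (vnorm v) 0.
  by have e := vnorm_eq0 v v0; rewrite v0 e mulmx0 mulr0 /vnorm sum2 !mxE expr0n /= addr0 sqrtr0.
have gt : 0 < vnorm v by rewrite lt_def nz vnorm_ge0.
have u1 : vnorm ((vnorm v)^-1 *: v) = 1.
  by rewrite vnormZ ger0_norm ?invr_ge0 ?vnorm_ge0 // mulVf.
have := opnorm_ge A _ u1; rewrite -scalemxAr vnormZ ger0_norm ?invr_ge0 ?vnorm_ge0 //.
by rewrite ler_pdivrMl // mulrC.
Qed.

Lemma opnormM A B : opnorm (A *m B) <= opnorm A * opnorm B.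
Proof.
apply: opnorm_le => v hv; rewrite -mulmxA.
apply: le_trans (opnorm_vec _ _) _.
apply: ler_wpM2l; first exact: opnorm_ge0.
by have := opnorm_vec B v; rewrite hv mulr1.
Qed.

Lemma opnormZ a A : opnorm (a *: A) = `|a| * opnorm A.
Proof.
have le1 : forall b B, opnorm (b *: B) <= `|b| * opnorm B.
  move=> b B; apply: opnorm_le => v hv; rewrite -scalemxAl vnormZ.
  by apply: ler_wpM2l => //; exact: opnorm_ge.
apply/le_anti; rewrite le1 /=.
have [->|a0] := eqVneq a 0; first by rewrite normr0 mul0r opnorm_ge0.
have := le1 a^-1 (a *: A); rewrite scalerA mulVf // scale1r normrV ?unitfE //.
by rewrite ler_pdivlMl ?normr_gt0.
Qed.

Lemma opnormD A B : opnorm (A + B) <= opnorm A + opnorm B.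
Proof.
apply: opnorm_le => v hv; rewrite mulmxDl.
apply: le_trans (vnormD _ _) _.
by apply: lerD; [have := opnorm_vec A v|have := opnorm_vec B v]; rewrite hv mulr1.
Qed.

Lemma opnorm1 : opnorm (1%:M : 'M[R]_2) = 1.
Proof.
apply/le_anti; rewrite opnorm_le /=; last by move=> v hv; rewrite mul1mx hv.
by have := opnorm_ge 1%:M e0 e0_unit; rewrite mul1mx e0_unit.
Qed.

Lemma opnorm_gt0 A : A != 0 -> 0 < opnorm A.
Proof.
move=> nz.
have : (A *m e0 != 0) || (A *m e1 != 0).
  rewrite -negb_and; apply/negP => /andP [/eqP h0 /eqP h1]; move/eqP: nz; apply.
  apply/matrixP => i j; rewrite mxE.
  case: (ord2P j) => ->.
  - have := congr1 (fun M : 'cV[R]_2 => M i 0) h0; rewrite mulmx2E !mxE /=.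
    by rewrite mulr1 mulr0 addr0.
  - have := congr1 (fun M : 'cV[R]_2 => M i 0) h1; rewrite mulmx2E !mxE /=.
    by rewrite mulr1 mulr0 add0r.
case/orP => [h|h].
- apply: lt_le_trans (opnorm_ge A e0 e0_unit).
  rewrite lt_def vnorm_ge0 andbT; apply/eqP => /(vnorm_eq0 _) e; by rewrite e eqxx in h.
- apply: lt_le_trans (opnorm_ge A e1 e1_unit).
  rewrite lt_def vnorm_ge0 andbT; apply/eqP => /(vnorm_eq0 _) e; by rewrite e eqxx in h.
Qed.

Lemma opnorm_scal a : opnorm (a%:M : 'M[R]_2) = `|a|.
Proof. by rewrite -scalemx1 opnormZ opnorm1 mulr1. Qed.

End Norms.


Section Alg.
Context {R : realType}.
Implicit Types (A B M : 'M[R]_2).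

Lemma det2 A : \det A = A i0 i0 * A i1 i1 - A i0 i1 * A i1 i0.
Proof.
rewrite (expand_det_row _ i0) sum2 /cofactor !det_mx11 !mxE /=.
rewrite /i0 /i1 /=.
have -> : lift ord0 (0 : 'I_1) = ord_max by apply/val_inj.
have -> : lift ord_max (0 : 'I_1) = ord0 :> 'I_2 by apply/val_inj.
rewrite /= expr0 expr1 mul1r; ring.
Qed.

Lemma tr2 A : \tr A = A i0 i0 + A i1 i1.
Proof. by rewrite /mxtrace sum2. Qed.

Lemma CH2 M : M * M = \tr M *: M - (\det M)%:M.
Proof.
apply/matrixP => i j; rewrite -mulmxE mulmx2E !mxE tr2 det2.
case: (ord2P i) => ->; case: (ord2P j) => -> /=; rewrite /i0 /i1 /=; ring.
Qed.

Lemma bernoulli {r : R} n : 0 <= r -> 1 + n%:R * r <= (1 + r) ^+ n.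
Proof.
move=> r0; elim: n => [|n IH]; first by rewrite mul0r addr0 expr0.
rewrite exprS -natr1 mulrDl mul1r.
have h1 : 0 <= (1 + r) ^+ n by rewrite exprn_ge0 // addr_ge0.
have : (1 + r) * (1 + n%:R * r) <= (1 + r) * (1 + r) ^+ n.
  by apply: ler_wpM2l => //; rewrite addr_ge0.
have : 0 <= n%:R * r * r by rewrite !mulr_ge0.
nra.
Qed.

Lemma pow_big {r : R} (B : R) : 1 < r -> exists n, B < r ^+ n.
Proof.
move=> r1; set x := `|B| / (r - 1).
have x0 : 0 <= x by rewrite divr_ge0 ?normr_ge0 // subr_ge0 ltW.
have := archi_boundP x0; set n := Num.Def.archi_bound x => hn.
exists n.
have r1' : 0 <= r - 1 by rewrite subr_ge0 ltW.
have hb := bernoulli n r1'.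
have e : 1 + (r - 1) = r by ring.
rewrite e in hb.
apply: lt_le_trans hb.
have : `|B| < n%:R * (r - 1) by rewrite -ltr_pdivrMr ?subr_gt0.
have := ler_norm B. lra.
Qed.

Lemma geo_small {r e : R} : 0 <= r -> r < 1 -> 0 < e -> exists n, r ^+ n < e.
Proof.
move=> r0 r1 e0; have [->|rn0] := eqVneq r 0; first by exists 1%N; rewrite expr1.
have rp : 0 < r by rewrite lt_def rn0.
have r1' : 1 < r^-1 by rewrite invf_gt1.
have [n hn] := pow_big (e^-1) r1'.
exists n; rewrite exprVn in hn.
by move: hn; rewrite ltf_pV2 // posrE ?exprn_gt0.
Qed.

Lemma pow_le1 (r u : R) : 0 <= r -> (forall n, r ^+ n <= u) -> r <= 1.
Proof.
move=> r0 h; rewrite leNgt; apply/negP => r1.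
have [n hn] := pow_big u r1; have := h n; lra.
Qed.

End Alg.


Section Eig.
Context {R : realType}.
Implicit Types (A B M : 'M[R]_2).

Lemma CH2' M : M * M = \tr M *: M - \det M *: 1.
Proof. by rewrite CH2 -scalemx1 idmxE. Qed.

Lemma opnormM' A B : opnorm (A * B) <= opnorm A * opnorm B.
Proof. by rewrite -mulmxE opnormM. Qed.

Lemma opnormB A B : opnorm (A - B) <= opnorm A + opnorm B.
Proof. by apply: le_trans (opnormD _ _) _; rewrite -scaleN1r opnormZ normrN1 mul1r. Qed.

Lemma opnorm1' : opnorm (1 : 'M[R]_2) = 1.
Proof. by rewrite -idmxE opnorm1. Qed.

Lemma eig_step {M l1 l2} : l1 + l2 = \tr M -> l1 * l2 = \det M ->
  M * (M - l2 *: 1) = l1 *: (M - l2 *: 1).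
Proof.
move=> ht hd.
rewrite mulrBr -scalerAr mulr1 CH2' -ht -hd scalerBr scalerA scalerDl.
by rewrite addrAC addrK.
Qed.

Lemma eigen_split {M} : 4 * \det M < \tr M ^+ 2 ->
  exists l1 l2 : R, [/\ l1 != l2, l1 + l2 = \tr M, l1 * l2 = \det M,
     M - l2 *: 1 != 0 & M - l1 *: 1 != 0].
Proof.
move=> hD; set t := \tr M in hD *; set d := \det M in hD *.
have D0 : 0 <= t ^+ 2 - 4 * d by rewrite subr_ge0 ltW.
set s := Num.sqrt (t ^+ 2 - 4 * d).
have s2 : s ^+ 2 = t ^+ 2 - 4 * d by rewrite sqr_sqrtr.
have sp : 0 < s by rewrite sqrtr_gt0 subr_gt0.
exists ((t + s) / 2), ((t - s) / 2); split.
- apply/eqP => e; have : s = 0 by move: e; lra.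
  by move=> s0; rewrite s0 ltxx in sp.
- by field.
- have -> : (t + s) / 2 * ((t - s) / 2) = (t ^+ 2 - s ^+ 2) / 4 by field.
  by rewrite s2; field.
- apply/eqP => e.
  have hM : M = ((t - s) / 2) *: 1 by apply/eqP; rewrite -subr_eq0 e.
  have e2 : t = (t - s) / 2 * 2.
    by rewrite /t {1}hM mxtraceZ -idmxE mxtrace_scalar.
  have : s = 0 by lra.
  by move=> s0; rewrite s0 ltxx in sp.
- apply/eqP => e.
  have hM : M = ((t + s) / 2) *: 1 by apply/eqP; rewrite -subr_eq0 e.
  have e2 : t = (t + s) / 2 * 2.
    by rewrite /t {1}hM mxtraceZ -idmxE mxtrace_scalar.
  have : s = 0 by lra.
  by move=> s0; rewrite s0 ltxx in sp.
Qed.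

Lemma pow_eig {M l P} : M * P = l *: P -> forall n, M ^+ n * P = l ^+ n *: P.
Proof.
move=> h; elim=> [|n IH]; first by rewrite !expr0 mul1r scale1r.
by rewrite exprSr -mulrA h -scalerAr IH scalerA -exprS.
Qed.

Lemma eig_abs_le1 {M l P} {u : R} : P != 0 -> M * P = l *: P ->
  (forall n, opnorm (M ^+ n) <= u) -> `|l| <= 1.
Proof.
move=> nz h hu; apply: (@pow_le1 _ _ u) => // n.
have gP := opnorm_gt0 _ nz.
have := opnormM' (M ^+ n) P; rewrite (pow_eig h) opnormZ normrX => h1.
have : `|l| ^+ n * opnorm P <= u * opnorm P.
  apply: le_trans h1 _; apply: ler_wpM2r; [exact: ltW | exact: hu].
by rewrite ler_pM2r.
Qed.

Lemma trace_id M (l u : R) : 0 < l -> (forall n, l <= opnorm (M ^+ n) <= u) ->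
  4 * \det M < \tr M ^+ 2 ->
  exists la mu : R, [/\ la != mu, la + mu = \tr M, la * mu = \det M, la ^+ 2 = 1 &
     [/\ M - mu *: 1 != 0, M - la *: 1 != 0,
         M * (M - mu *: 1) = la *: (M - mu *: 1) & M * (M - la *: 1) = mu *: (M - la *: 1)]].
Proof.
move=> l0 hb hD.
have [l1 [l2 [ne ht hd nz1 nz2]]] := eigen_split hD.
have E1 := eig_step ht hd.
have E2 : M * (M - l1 *: 1) = l2 *: (M - l1 *: 1) by apply: eig_step; [rewrite addrC | rewrite mulrC].
have hu : forall n, opnorm (M ^+ n) <= u by move=> n; case/andP: (hb n).
have a1 := eig_abs_le1 nz1 E1 hu.
have a2 := eig_abs_le1 nz2 E2 hu.
have key : `|l1| = 1 \/ `|l2| = 1.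
  case: (eqVneq `|l1| 1) => [->|n1]; first by left.
  case: (eqVneq `|l2| 1) => [->|n2]; first by right.
  exfalso.
  have b1 : `|l1| < 1 by rewrite lt_neqAle n1 a1.
  have b2 : `|l2| < 1 by rewrite lt_neqAle n2 a2.
  set P1 := M - l2 *: 1 in nz1 E1; set P2 := M - l1 *: 1 in nz2 E2.
  set Q := opnorm P1 + opnorm P2.
  have Qp : 0 < Q by rewrite ltr_wpDr ?opnorm_ge0 ?opnorm_gt0.
  have dp : 0 < `|l1 - l2| by rewrite normr_gt0 subr_eq0.
  set r := Num.max `|l1| `|l2|.
  have r1 : r < 1 by rewrite gt_max b1 b2.
  have r0 : 0 <= r by rewrite le_max normr_ge0.
  have [n hn] := geo_small r0 r1 (divr_gt0 (mulr_gt0 dp l0) Qp).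
  have eq : (l1 - l2) *: M ^+ n = l1 ^+ n *: P1 - l2 ^+ n *: P2.
    rewrite -(pow_eig E1) -(pow_eig E2) -mulrBr.
    have -> : P1 - P2 = (l1 - l2) *: 1.
      by apply/matrixP => i j; rewrite !mxE; ring.
    by rewrite -scalerAr mulr1.
  have := opnormB (l1 ^+ n *: P1) (l2 ^+ n *: P2).
  rewrite -eq !opnormZ !normrX => h.
  have h1 : `|l1| ^+ n <= r ^+ n by apply: lerXn2r; rewrite ?nnegrE ?normr_ge0 // le_max lexx.
  have h2 : `|l2| ^+ n <= r ^+ n by apply: lerXn2r; rewrite ?nnegrE ?normr_ge0 // le_max lexx ?orbT.
  have g1 := opnorm_ge0 P1; have g2 := opnorm_ge0 P2.
  have hl : l <= opnorm (M ^+ n) by case/andP: (hb n).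
  have : `|l1 - l2| * l <= r ^+ n * Q.
    apply: le_trans (_ : `|l1 - l2| * opnorm (M ^+ n) <= _).
      by apply: ler_wpM2l => //; exact: ltW.
    apply: le_trans h _; rewrite /Q mulrDr.
    by apply: lerD; apply: ler_wpM2r.
  move: hn; rewrite ltr_pdivlMr // => hn.
  lra.
have sq : forall x : R, `|x| = 1 -> x ^+ 2 = 1.
  by move=> x hx; rewrite -real_normK ?num_real // hx expr1n.
case: key => [k|k].
- exists l1, l2; split => //; first exact: sq.
- exists l2, l1; split => //; [by rewrite eq_sym | by rewrite addrC | by rewrite mulrC | exact: sq].
Qed.

Lemma trace_sq (la mu : R) : la ^+ 2 = 1 -> (la + mu) ^+ 2 = (1 + la * mu) ^+ 2.
Proof.
move=> h; apply/eqP; rewrite -subr_eq0.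
have -> : (la + mu) ^+ 2 - (1 + la * mu) ^+ 2 = (la ^+ 2 - 1) * (1 - mu ^+ 2) by ring.
by rewrite h subrr mul0r.
Qed.

End Eig.


Section Fin.
Context {R : realType}.
Implicit Types (A B M T X Y : 'M[R]_2) (v w x : 'cV[R]_2).

Definition dt v w := v i0 0 * w i1 0 - v i1 0 * w i0 0.

Lemma dtDl (a b : R) v w x : dt (a *: v + b *: w) x = a * dt v x + b * dt w x.
Proof. rewrite /dt !mxE; ring. Qed.
Lemma dtDr (a b : R) v w x : dt x (a *: v + b *: w) = a * dt x v + b * dt x w.
Proof. rewrite /dt !mxE; ring. Qed.
Lemma dtvv v : dt v v = 0.
Proof. rewrite /dt; ring. Qed.
Lemma dtC v w : dt w v = - dt v w.
Proof. rewrite /dt; ring. Qed.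

Lemma tr_dt M v w : \tr M * dt v w = dt (M *m v) w + dt v (M *m w).
Proof. rewrite /dt !mulmx2E tr2; ring. Qed.

Lemma det_dt M v w : \det M * dt v w = dt (M *m v) (M *m w).
Proof. rewrite /dt !mulmx2E det2; ring. Qed.

Lemma vec_eq v w : v i0 0 = w i0 0 -> v i1 0 = w i1 0 -> v = w.
Proof. move=> h0 h1; apply/eqP; rewrite -subr_eq0; by apply/eqP; apply: col_eq0; rewrite !mxE ?h0 ?h1 subrr. Qed.

Lemma cramer v1 v2 x : dt v1 v2 *: x = dt x v2 *: v1 + dt v1 x *: v2.
Proof. apply: vec_eq; rewrite !mxE /dt; ring. Qed.

Lemma nz_entry {v} : v != 0 -> v i0 0 != 0 \/ v i1 0 != 0.
Proof.
move=> nz; case: (eqVneq (v i0 0) 0) => h0; last by left.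
case: (eqVneq (v i1 0) 0) => h1; last by right.
by rewrite (col_eq0 _ h0 h1) eqxx in nz.
Qed.

Lemma dep {v w} : v != 0 -> dt v w = 0 -> exists k, w = k *: v.
Proof.
move=> nz hd.
have e : v i0 0 * w i1 0 = v i1 0 * w i0 0 by apply/eqP; rewrite -subr_eq0; apply/eqP.
case: (nz_entry nz) => h.
- exists (w i0 0 / v i0 0); apply: vec_eq; rewrite !mxE.
  + by rewrite divfK.
  + by apply: (mulIf h); rewrite mulrAC divfK // mulrC e mulrC.
- exists (w i1 0 / v i1 0); apply: vec_eq; rewrite !mxE.
  + by apply: (mulIf h); rewrite mulrAC divfK // mulrC -e mulrC.
  + by rewrite divfK.
Qed.

Lemma ker1 {T v w} : T != 0 -> T *m v = 0 -> T *m w = 0 -> v != 0 -> exists k, w = k *: v.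
Proof.
move=> Tnz hv hw nz; apply: (dep nz).
apply/eqP; apply: contraT => dnz; suff : T = 0 by move/eqP; rewrite (negbTE Tnz).
apply/matrixP => i j; rewrite mxE.
have r1 : T i i0 * v i0 0 + T i i1 * v i1 0 = 0.
  by have := congr1 (fun M : 'cV[R]_2 => M i 0) hv; rewrite mulmx2E mxE.
have r2 : T i i0 * w i0 0 + T i i1 * w i1 0 = 0.
  by have := congr1 (fun M : 'cV[R]_2 => M i 0) hw; rewrite mulmx2E mxE.
case: (ord2P j) => ->.
- apply: (mulIf dnz); rewrite mul0r.
  have -> : T i i0 * dt v w = w i1 0 * (T i i0 * v i0 0 + T i i1 * v i1 0)
                             - v i1 0 * (T i i0 * w i0 0 + T i i1 * w i1 0) by rewrite /dt; ring.
  by rewrite r1 r2 !mulr0 subrr.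
- apply: (mulIf dnz); rewrite mul0r.
  have -> : T i i1 * dt v w = v i0 0 * (T i i0 * w i0 0 + T i i1 * w i1 0)
                             - w i0 0 * (T i i0 * v i0 0 + T i i1 * v i1 0) by rewrite /dt; ring.
  by rewrite r1 r2 !mulr0 subrr.
Qed.

Lemma col_nz {T} : T != 0 -> exists z : 'cV[R]_2, T *m z != 0.
Proof.
move=> nz.
case: (eqVneq (T *m e0) 0) => h0; last by exists e0.
case: (eqVneq (T *m e1) 0) => h1; last by exists e1.
suff : T = 0 by move/eqP; rewrite (negbTE nz).
apply/matrixP => i j; rewrite mxE.
case: (ord2P j) => ->.
- have := congr1 (fun M : 'cV[R]_2 => M i 0) h0.
  rewrite mulmx2E !mxE /=. by rewrite mulr1 mulr0 addr0.
- have := congr1 (fun M : 'cV[R]_2 => M i 0) h1.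
  rewrite mulmx2E !mxE /=. by rewrite mulr1 mulr0 add0r.
Qed.

Lemma vpow_eig {M l v} : M *m v = l *: v -> forall k, M ^+ k *m v = l ^+ k *: v.
Proof.
move=> h; elim=> [|k IH]; first by rewrite !expr0 -idmxE mul1mx scale1r.
by rewrite exprS -mulmxE -mulmxA IH -scalemxAr h scalerA -exprSr.
Qed.


Lemma vander3 (c0 c1 c2 d : R) : d != 0 -> d != 1 -> d ^+ 2 != 1 ->
  c0 + c1 + c2 = 0 -> c0 + c1 * d + c2 * d ^+ 2 = 0 ->
  c0 + c1 * d ^+ 2 + c2 * (d ^+ 2) ^+ 2 = 0 -> c1 = 0.
Proof.
move=> d0 d1 d2 h1 h2 h3.
have f1 : c1 + c2 * (1 + d) = 0.
  have : (1 - d) * (c1 + c2 * (1 + d)) = (c0 + c1 + c2) - (c0 + c1 * d + c2 * d ^+ 2) by ring.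
  rewrite h1 h2 subrr => /eqP; rewrite mulf_eq0 subr_eq0 eq_sym (negbTE d1) /=.
  by move/eqP.
have f2 : c1 + c2 * (d * (1 + d)) = 0.
  have : (d * (1 - d)) * (c1 + c2 * (d * (1 + d))) = (c0 + c1 * d + c2 * d ^+ 2) - (c0 + c1 * d ^+ 2 + c2 * (d ^+ 2) ^+ 2) by ring.
  rewrite h2 h3 subrr => /eqP; rewrite !mulf_eq0 (negbTE d0) subr_eq0 eq_sym (negbTE d1) /=.
  by move/eqP.
have f3 : c2 * (1 - d ^+ 2) = 0.
  have -> : c2 * (1 - d ^+ 2) = (c1 + c2 * (1 + d)) - (c1 + c2 * (d * (1 + d))) by ring.
  by rewrite f1 f2 subrr.
have c20 : c2 = 0.
  have d2' : (1 == d ^+ 2) = false by rewrite eq_sym (negbTE d2).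
  by move/eqP: f3; rewrite mulf_eq0 subr_eq0 d2' orbF => /eqP.
by move: f1; rewrite c20 mul0r addr0.
Qed.

Lemma disc_pos M (l u : R) : 0 < l -> opnorm M <= u -> l <= opnorm (M * M) ->
  2 * `|\det M| <= l -> 16 * u ^+ 2 * `|\det M| < l ^+ 2 -> 4 * \det M < \tr M ^+ 2.
Proof.
move=> l0 hu hl hd1 hd2.
rewrite CH2' in hl.
have := opnormB (\tr M *: M) (\det M *: 1).
rewrite !opnormZ opnorm1' mulr1 => hB.
have g := opnorm_ge0 M.
set t := \tr M in hl hB *; set d := \det M in hd1 hd2 hB *.
have T0 := normr_ge0 t.
have tu : `|t| * opnorm M <= `|t| * u by apply: ler_wpM2l.
have htu : l <= 2 * (`|t| * u) by lra.
have u0 : 0 < u.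
  rewrite ltNge; apply/negP => u0.
  have : `|t| * u <= 0 by rewrite mulr_ge0_le0.
  lra.
have sq : l ^+ 2 <= 4 * (`|t| * u) ^+ 2.
  have e2 : 4 * (`|t| * u) ^+ 2 = (2 * (`|t| * u)) ^+ 2 by ring.
  by rewrite e2; apply: lerXn2r; rewrite ?nnegrE; lra.
have e : (`|t| * u) ^+ 2 = t ^+ 2 * u ^+ 2 by rewrite exprMn real_normK ?num_real.
rewrite e in sq.
have dd := ler_norm d.
have u2 : 0 < u ^+ 2 by rewrite exprn_gt0.
have : 4 * d * u ^+ 2 < t ^+ 2 * u ^+ 2.
  have : 4 * d * u ^+ 2 <= 4 * `|d| * u ^+ 2 by apply: ler_wpM2r; [exact: ltW | apply: ler_wpM2l].
  nra.
by rewrite ltr_pM2r.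
Qed.

Lemma detXn M n : \det (M ^+ n) = \det M ^+ n.
Proof.
elim: n => [|n IH]; first by rewrite !expr0 -idmxE det1.
by rewrite !exprS -mulmxE det_mulmx IH.
Qed.

End Fin.


Section Fin2.
Context {R : realType}.
Implicit Types (A B M T X Y : 'M[R]_2) (v w x : 'cV[R]_2).

Lemma cramer' v1 v2 x : dt v1 v2 != 0 ->
  x = (dt x v2 / dt v1 v2) *: v1 + (dt v1 x / dt v1 v2) *: v2.
Proof. move=> D; apply: vec_eq; rewrite !mxE; move: D; rewrite /dt => D; field; exact: D. Qed.

Lemma dt_lin1 (p q : R) v1 v2 : dt (p *: v1 + q *: v2) v2 = p * dt v1 v2.
Proof. rewrite /dt !mxE; ring. Qed.
Lemma dt_lin2 (r s : R) v1 v2 : dt v1 (r *: v1 + s *: v2) = s * dt v1 v2.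
Proof. rewrite /dt !mxE; ring. Qed.
Lemma dt_lin3 (p q r s : R) v1 v2 :
  dt (p *: v1 + q *: v2) (r *: v1 + s *: v2) = (p * s - q * r) * dt v1 v2.
Proof. rewrite /dt !mxE; ring. Qed.

Lemma scal1v (a : R) v : (a *: (1 : 'M[R]_2)) *m v = a *: v.
Proof. by rewrite -scalemxAl -idmxE mul1mx. Qed.

Lemma transfer X Y N v (nu beta : R) : v != 0 -> X ^+ N *m v = nu *: v ->
  (Y * X ^+ N) *m v = beta *: v -> X ^+ N - nu *: 1 != 0 -> nu != 0 ->
  (exists a, X *m v = a *: v) /\ (exists b, Y *m v = b *: v).
Proof.
move=> nz hX hY Tnz nu0; split.
- apply: (ker1 Tnz) => //.
  + by rewrite mulmxBl hX scal1v subrr.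
  + rewrite mulmxBl scal1v mulmxA mulmxE -exprSr exprS -mulmxE -mulmxA hX.
    by rewrite -scalemxAr subrr.
- exists (beta / nu); apply: (scalerI nu0).
  move: hY; rewrite -mulmxE -mulmxA hX -scalemxAr => ->.
  by rewrite scalerA mulrC divfK.
Qed.


Lemma final_alg (S : 'M[R]_2 -> Prop) X Y (l u : R) :
  S X -> S Y -> (forall M N, S M -> S N -> S (M * N)) ->
  0 < l -> l <= 1 -> 1 <= u -> (forall M, S M -> l <= opnorm M <= u) ->
  `|\det X| < 1 -> `|\det Y| < 1 -> \det X != 0 ->
  exists v : 'cV[R]_2, v != 0 /\ (exists a, X *m v = a *: v) /\ (exists b, Y *m v = b *: v).
Proof.
move=> SX SY Smul l0 l1 u1 Sb dX dY dX0.
have Spow : forall M, S M -> forall n, S (M ^+ n.+1).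
  move=> M SM; elim=> [|n IH]; first by rewrite expr1.
  by rewrite exprS; apply: Smul.
have Sbp : forall M, S M -> forall n, l <= opnorm (M ^+ n) <= u.
  move=> M SM [|n]; first by rewrite expr0 opnorm1' l1 u1.
  exact: Sb (Spow M SM n).
set x := `|\det X|.
have x0 : 0 <= x := normr_ge0 _.
have u0 : 0 < u by lra.
set eta := Num.min (l / 2) (l ^+ 2 / (16 * u ^+ 2)).
have eta0 : 0 < eta.
  by rewrite lt_min !divr_gt0 // ?exprn_gt0 // mulr_gt0 // exprn_gt0.
have eta1 : eta <= l / 2 by rewrite ge_min lexx.
have eta2 : eta <= l ^+ 2 / (16 * u ^+ 2) by rewrite ge_min lexx orbT.
have [N hN] := geo_small x0 dX eta0.
have TI : forall M, S M -> `|\det M| <= x ^+ N ->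
   exists la mu : R, [/\ la != mu, la + mu = \tr M, la * mu = \det M, la ^+ 2 = 1 &
     [/\ M - mu *: 1 != 0, M - la *: 1 != 0,
         M * (M - mu *: 1) = la *: (M - mu *: 1) & M * (M - la *: 1) = mu *: (M - la *: 1)]].
  move=> M SM hM; apply: (trace_id M l u) => //; first exact: Sbp.
  have hd : `|\det M| < eta by apply: le_lt_trans hM hN.
  apply: (disc_pos M l u) => //.
  - by case/andP: (Sb M SM).
  - by case/andP: (Sb _ (Smul _ _ SM SM)).
  - by lra.
  - have : `|\det M| < l ^+ 2 / (16 * u ^+ 2) by apply: lt_le_trans hd eta2.
    by rewrite ltr_pdivlMr ?mulr_gt0 ?exprn_gt0 // mulrC.
have TS : forall M, S M -> `|\det M| <= x ^+ N -> \tr M ^+ 2 = (1 + \det M) ^+ 2.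
  move=> M SM hM; have [la [mu [_ hs hp la2 _]]] := TI M SM hM.
  by rewrite -hs -hp trace_sq.
have xN1 : x ^+ N.+1 <= x ^+ N.
  by rewrite exprS ler_piMl ?exprn_ge0 // ltW.
set X' := X ^+ N.+1.
have SX' : S X' := Spow X SX N.
have dX' : \det X' = \det X ^+ N.+1 by rewrite detXn.
have hX'1 : `|\det X'| <= x ^+ N by rewrite dX' normrX.
have hX'2 : `|\det X'| < 1.
  by rewrite dX' normrX exprn_ilt1 // ltW.
have dX'0 : \det X' != 0 by rewrite dX' expf_neq0.
have [la [mu [ne hs hp la2 [nzmu nzla Emu Ela]]]] := TI X' SX' hX'1.
have [z1 hz1] := col_nz nzmu.
have [z2 hz2] := col_nz nzla.
set v1 := (X' - mu *: 1) *m z1 in hz1.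
set v2 := (X' - la *: 1) *m z2 in hz2.
have hv1 : X' *m v1 = la *: v1.
  by rewrite /v1 mulmxA mulmxE Emu -scalemxAl.
have hv2 : X' *m v2 = mu *: v2.
  by rewrite /v2 mulmxA mulmxE Ela -scalemxAl.
have la0 : la != 0.
  by apply/eqP => h; move: la2; rewrite h expr0n /= => /eqP; rewrite eq_sym oner_eq0.
have mu0 : mu != 0.
  by apply/eqP => h; move: dX'0; rewrite -hp h mulr0 eqxx.
set D := dt v1 v2.
have D0 : D != 0.
  apply/eqP => hD; have [k hk] := dep hz1 hD.
  have : (la - mu) *: v2 = 0.
    rewrite scalerBl -hv2 hk -scalemxAr hv1 scalerA mulrC -scalerA subrr //.
  move/eqP; rewrite scaler_eq0 subr_eq0 (negbTE ne) /= => /eqP h2.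
  by rewrite h2 eqxx in hz2.
set Y' := Y * X'.
have SY' : S Y' := Smul _ _ SY SX'.
have hY' : `|\det Y'| <= x ^+ N.
  rewrite /Y' -mulmxE det_mulmx normrM.
  rewrite -[x ^+ N]mul1r; apply: ler_pM => //; exact: ltW.
have SM : forall k, S (X' ^+ k * Y') /\ `|\det (X' ^+ k * Y')| <= x ^+ N.
  case=> [|k]; first by rewrite expr0 mul1r.
  split; first exact: Smul (Spow _ SX' k) SY'.
  rewrite -mulmxE det_mulmx normrM detXn normrX -[x ^+ N]mul1r.
  apply: ler_pM => //; first exact: exprn_ge0.
  by apply: exprn_ile1 => //; exact: ltW.
set a := dt (Y' *m v1) v2 / D; set b := dt v1 (Y' *m v1) / D.
set c := dt (Y' *m v2) v2 / D; set e := dt v1 (Y' *m v2) / D.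
have hY1 : Y' *m v1 = a *: v1 + b *: v2 by exact: cramer'.
have hY2 : Y' *m v2 = c *: v1 + e *: v2 by exact: cramer'.
have hM1 : forall k, (X' ^+ k * Y') *m v1 = (a * la ^+ k) *: v1 + (b * mu ^+ k) *: v2.
  move=> k; rewrite -mulmxE -mulmxA hY1 mulmxDr -!scalemxAr (vpow_eig hv1) (vpow_eig hv2).
  by rewrite !scalerA.
have hM2 : forall k, (X' ^+ k * Y') *m v2 = (c * la ^+ k) *: v1 + (e * mu ^+ k) *: v2.
  move=> k; rewrite -mulmxE -mulmxA hY2 mulmxDr -!scalemxAr (vpow_eig hv1) (vpow_eig hv2).
  by rewrite !scalerA.
have key : forall k, (a * la ^+ k + e * mu ^+ k) ^+ 2 =
    (1 + ((a * la ^+ k) * (e * mu ^+ k) - (b * mu ^+ k) * (c * la ^+ k))) ^+ 2.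
  move=> k; have [Sk dk] := SM k.
  have ht : \tr (X' ^+ k * Y') = a * la ^+ k + e * mu ^+ k.
    apply: (mulIf D0); rewrite tr_dt hM1 hM2 dt_lin1 dt_lin2 /D; ring.
  have hd : \det (X' ^+ k * Y') = (a * la ^+ k) * (e * mu ^+ k) - (b * mu ^+ k) * (c * la ^+ k).
    by apply: (mulIf D0); rewrite det_dt hM1 hM2 dt_lin3.
  by rewrite -ht -hd; exact: TS.
have dn0 : la * mu != 0 by rewrite mulf_neq0.
have dlt : `|la * mu| < 1 by rewrite hp.
have dn1 : la * mu != 1.
  by apply/eqP => h; move: dlt; rewrite h normr1 ltxx.
have dn2 : (la * mu) ^+ 2 != 1.
  apply/eqP => h; move: dlt => dlt.
  have : `|(la * mu) ^+ 2| < 1 by rewrite normrX exprn_ilt1.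
  by rewrite h normr1 ltxx.
have bc0 : b * c = 0.
  have V : 2 * a * e - 2 * (a * e - b * c) = 0.
    have hla : la = 1 \/ la = -1.
      by move/eqP: la2; rewrite sqrf_eq1 => /orP [] /eqP; [left|right].
    apply: (vander3 (a ^+ 2 - 1) _ (e ^+ 2 - (a * e - b * c) ^+ 2) (la * mu) dn0 dn1 dn2).
    - move: (key 0%N) => /eqP; rewrite -subr_eq0 => /eqP <-; ring.
    - move: (key 1%N) => /eqP; rewrite -subr_eq0 => /eqP <-.
      by case: hla => ->; ring.
    - move: (key 2%N) => /eqP; rewrite -subr_eq0 => /eqP <-.
      by case: hla => ->; ring.
  have -> : b * c = (2 * a * e - 2 * (a * e - b * c)) / 2 by field.
  by rewrite V mul0r.
move/eqP: bc0; rewrite mulf_eq0 => /orP [] /eqP h0.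
- exists v1; split => //.
  apply: (@transfer X Y N.+1 v1 la a hz1 hv1 _ nzla la0).
  by rewrite -/X' -/Y' hY1 h0 scale0r addr0.
- exists v2; split => //.
  apply: (@transfer X Y N.+1 v2 mu e hz2 hv2 _ nzmu mu0).
  by rewrite -/X' -/Y' hY2 h0 scale0r add0r.
Qed.

End Fin2.


Definition symb (b : bool) : 'I_3 := if b then sym1 else sym2.
Definition z3 : nat -> 'I_3 := fun _ => sym3.
Fixpoint xs (m : nat) (s : seq bool) : nat -> 'I_3 :=
  match s with
  | [::] => z3
  | b :: s' => fun k => if (k < m)%N then sym3 else if k == m then symb b else xs m s' (k - m.+1)
  end.

Lemma xs_lt m s j : (j < m)%N -> xs m s j = sym3.
Proof. by case: s => [|b s] //= ->. Qed.

Lemma shift0 (x : nat -> 'I_3) : shiftk 0 x = x.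
Proof. by apply: funext => j; rewrite /shiftk addn0. Qed.

Lemma shift_shift a k (x : nat -> 'I_3) : shiftk k (shiftk a x) = shiftk (k + a) x.
Proof. by apply: funext => j; rewrite /shiftk addnA. Qed.

Lemma shift_xs m b s : shiftk m.+1 (xs m (b :: s)) = xs m s.
Proof.
apply: funext => j; rewrite /shiftk /=.
have -> : (j + m.+1 < m)%N = false by lia.
have -> : (j + m.+1 == m) = false by lia.
by rewrite addnK.
Qed.

Lemma xs_agree m b s j : (j < m.+1 + m)%N -> xs m (b :: s) j = xs m [:: b] j.
Proof.
move=> hj /=; case: ifP => // h1; case: ifP => // h2.
by rewrite xs_lt //; lia.
Qed.

Lemma shift1_xs m b : shiftk 1 (xs m.+1 [:: b]) = xs m [:: b].
Proof.
apply: funext => j; rewrite /shiftk /=.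
have -> : (j + 1 < m.+1)%N = (j < m)%N by lia.
have -> : (j + 1 == m.+1) = (j == m) by lia.
by [].
Qed.

Section Symb.
Context {R : realType} (A : 'I_3 -> 'M[R]_2) (c : R).
Hypothesis hA3 : A sym3 = c%:M.

Lemma scal_pow (a : R) n : (a%:M : 'M[R]_2) ^+ n = (a ^+ n)%:M.
Proof.
elim: n => [|n IH]; first by rewrite !expr0 idmxE.
by rewrite !exprS IH -mulmxE -scalar_mxM.
Qed.

Lemma wp_split x a n : word_prod A x (a + n) = word_prod A x a * word_prod A (shiftk a x) n.
Proof.
rewrite /word_prod big_split_ord /=; congr (_ * _).
by apply: eq_bigr => k _; rewrite /shiftk addnC.
Qed.

Lemma wp_block m b s : word_prod A (xs m (b :: s)) m.+1 = c ^+ m *: A (symb b).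
Proof.
rewrite /word_prod big_ord_recr /= ltnn eqxx.
rewrite (eq_bigr (fun _ => c%:M)); last by move=> k _; rewrite ltn_ord hA3.
by rewrite prodr_const card_ord scal_pow -mulmxE mul_scalar_mx.
Qed.

Definition Bw (s : seq bool) : 'M[R]_2 := \prod_(b <- s) A (symb b).

Lemma wp_xs m s : word_prod A (xs m s) (size s * m.+1) = c ^+ (m * size s) *: Bw s.
Proof.
elim: s => [|b s IH].
  by rewrite /word_prod /Bw big_ord0 big_nil muln0 expr0 scale1r.
rewrite /= mulSn wp_split wp_block shift_xs IH /Bw big_cons.
by rewrite -scalerAl -scalerAr scalerA -exprD mulnS.
Qed.

Lemma wp_z3 n : word_prod A z3 n = (c ^+ n)%:M.
Proof. by rewrite /word_prod /z3 hA3 prodr_const card_ord scal_pow. Qed.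

End Symb.


Section Hold.
Context {R : realType} (f : (nat -> 'I_3) -> R) (K tau : R).
Hypotheses (K0 : 0 < K) (t0 : 0 < tau) (t1 : tau < 1).
Hypothesis hf : forall (i j : nat -> 'I_3) (n : nat),
  (forall m, (m < n)%N -> i m = j m) -> `|f i - f j| <= K * tau ^+ n.

Lemma birk_split x a n : birkhoff f x (a + n) = birkhoff f x a + birkhoff f (shiftk a x) n.
Proof.
rewrite /birkhoff big_split_ord /=; congr (_ + _).
by apply: eq_bigr => k _; rewrite shift_shift addnC.
Qed.

Lemma birk1 x : birkhoff f x 1 = f x.
Proof. by rewrite /birkhoff big_ord1 shift0. Qed.

Lemma geo_rev m : \sum_(k < m.+1) tau ^+ (m - k) <= (1 - tau)^-1.
Proof.
have tp : 0 < 1 - tau by rewrite subr_gt0.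
elim: m => [|m IH].
  rewrite big_ord1 subnn expr0 -[X in X <= _]invr1.
  by rewrite lef_pV2 ?posrE // lerBlDr lerDl ltW.
rewrite big_ord_recr /= subnn expr0.
have -> : \sum_(i < m.+1) tau ^+ (m.+1 - widen_ord (leqnSn m.+1) i) = tau * \sum_(k < m.+1) tau ^+ (m - k).
  rewrite mulr_sumr; apply: eq_bigr => k _ /=.
  by rewrite subSn ?exprS // -ltnS ltn_ord.
have : tau * \sum_(k < m.+1) tau ^+ (m - k) <= tau * (1 - tau)^-1 by apply: ler_wpM2l => //; exact: ltW.
have e : tau * (1 - tau)^-1 + 1 = (1 - tau)^-1 by field; rewrite subr_eq0 eq_sym lt_eqF.
lra.
Qed.

Lemma blk_cmp m b s : `|birkhoff f (xs m (b :: s)) m.+1 - birkhoff f (xs m [:: b]) m.+1|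
   <= K * tau ^+ m.+1 / (1 - tau).
Proof.
rewrite /birkhoff -sumrB; apply: le_trans (ler_norm_sum _ _ _) _.
apply: (@le_trans _ _ (\sum_(k < m.+1) K * tau ^+ m.+1 * tau ^+ (m - k))).
  apply: ler_sum => k _.
  apply: le_trans (hf _ _ (m.+1 + (m - k))%N _) _.
    move=> j hj; rewrite /shiftk xs_agree //.
    have := ltn_ord k; lia.
  by rewrite exprD mulrA.
rewrite -mulr_sumr; apply: ler_wpM2l; last exact: geo_rev.
by rewrite mulr_ge0 ?exprn_ge0 // ltW.
Qed.

Definition Psi m b := birkhoff f (xs m [:: b]) m.+1.
Definition eps m := K * tau ^+ m.+1 / (1 - tau).

Lemma eps_ge0 m : 0 <= eps m.
Proof. by rewrite /eps divr_ge0 ?mulr_ge0 ?exprn_ge0 ?ltW // subr_gt0. Qed.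

Lemma birk_xs m s : `|birkhoff f (xs m s) (size s * m.+1) - \sum_(b <- s) Psi m b|
   <= (size s)%:R * eps m.
Proof.
elim: s => [|b s IH].
  by rewrite /birkhoff big_ord0 big_nil subrr normr0 mul0r.
rewrite /= mulSn birk_split shift_xs big_cons.
have h1 := blk_cmp m b s.
have -> : birkhoff f (xs m (b :: s)) m.+1 + birkhoff f (xs m s) (size s * m.+1) -
    (Psi m b + \sum_(j <- s) Psi m j) =
    (birkhoff f (xs m (b :: s)) m.+1 - Psi m b) +
    (birkhoff f (xs m s) (size s * m.+1) - \sum_(j <- s) Psi m j) by ring.
apply: le_trans (ler_normD _ _) _.
rewrite -natr1 mulrDl mul1r addrC; apply: lerD => //.
Qed.

End Hold.


Section Main.
Context {R : realType} (A : 'I_3 -> 'M[R]_2) (c : R) (f : (nat -> 'I_3) -> R) (K tau C : R).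
Hypotheses (K0 : 0 < K) (t0 : 0 < tau) (t1 : tau < 1) (C0 : 0 < C).
Hypothesis hf : forall (i j : nat -> 'I_3) (n : nat),
  (forall m, (m < n)%N -> i m = j m) -> `|f i - f j| <= K * tau ^+ n.
Hypothesis hA3 : A sym3 = c%:M.
Hypothesis hc : c != 0.
Hypothesis hAu : forall k, A k \in unitmx.
Hypothesis H : forall i n, `|birkhoff f i n - ln (opnorm (word_prod A i n))| <= C.

Let L := ln `|c|.
Let cp : 0 < `|c|. Proof. by rewrite normr_gt0. Qed.

Lemma fz3 : f z3 = L.
Proof.
apply/eqP; rewrite -subr_eq0; apply/negP => /negP ne.
have dp : 0 < `|f z3 - L| by rewrite normr_gt0.
have x0 : 0 <= C / `|f z3 - L| by rewrite divr_ge0 ?ltW.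
have := archi_boundP x0; set n := Num.Def.archi_bound _ => hn.
have := H z3 n.
rewrite (wp_z3 _ _ hA3) opnorm_scal normrX lnXn // /birkhoff.
have -> : \sum_(k < n) f (shiftk k z3) = f z3 *+ n by rewrite (eq_bigr (fun=> f z3)) // sumr_const card_ord.
rewrite -mulrnBl normrMn -mulr_natr.
move: hn; rewrite ltr_pdivrMr // mulrC => hn h; lra.
Qed.

Definition psi m b := Psi f m b - m%:R * L.

Lemma psi_step m b : `|psi m.+1 b - psi m b| <= K * tau ^+ m.+1.
Proof.
rewrite /psi /Psi (_ : m.+2 = 1 + m.+1)%N // birk_split birk1 shift1_xs.
have -> : f (xs m.+1 [:: b]) + birkhoff f (xs m [:: b]) m.+1 - m.+1%:R * L -
    (birkhoff f (xs m [:: b]) m.+1 - m%:R * L) = f (xs m.+1 [:: b]) - f z3.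
  by rewrite fz3 -natr1; ring.
by apply: hf => j hj; rewrite xs_lt.
Qed.

Lemma eps_step m : eps K tau m - eps K tau m.+1 = K * tau ^+ m.+1.
Proof.
have nz : 1 - tau != 0 by rewrite subr_eq0 eq_sym lt_eqF.
rewrite /eps (exprS tau m.+1); field; exact: nz.
Qed.

Lemma g_mono b m k : psi m b - eps K tau m <= psi (m + k) b - eps K tau (m + k).
Proof.
elim: k => [|k IH]; first by rewrite addn0.
apply: le_trans IH _; rewrite addnS.
have := psi_step (m + k) b; have := eps_step (m + k).
rewrite ler_norml => e /andP [h1 h2]; lra.
Qed.

Lemma h_mono b m k : psi (m + k) b + eps K tau (m + k) <= psi m b + eps K tau m.
Proof.
elim: k => [|k IH]; first by rewrite addn0.
apply: le_trans _ IH; rewrite addnS.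
have := psi_step (m + k) b; have := eps_step (m + k).
rewrite ler_norml => e /andP [h1 h2]; lra.
Qed.

Definition a_of b := sup (range (fun m => psi m b - eps K tau m)).

Lemma gh b m n : psi m b - eps K tau m <= psi n b + eps K tau n.
Proof.
have e0 := eps_ge0 K tau K0 t0 t1 n; have e1 := eps_ge0 K tau K0 t0 t1 m.
case: (leqP m n) => h.
- rewrite -(subnKC h); apply: le_trans (g_mono b m (n - m)) _.
  rewrite subnKC //; lra.
- have h' : (n <= m)%N by apply: ltnW.
  rewrite -(subnKC h'); apply: le_trans _ (h_mono b n (m - n)).
  rewrite subnKC //; lra.
Qed.

Lemma a_bound b m : `|psi m b - a_of b| <= eps K tau m.
Proof.
have hs : has_sup (range (fun m => psi m b - eps K tau m)).
  split; first by exists (psi 0 b - eps K tau 0); exists 0%N.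
  by exists (psi 0 b + eps K tau 0) => _ [n _ <-]; exact: gh.
have g1 : psi m b - eps K tau m <= a_of b.
  by apply: (sup_upper_bound hs); exists m.
have g2 : a_of b <= psi m b + eps K tau m.
  apply: ge_sup; first by case: hs.
  by move=> _ [n _ <-]; exact: gh.
rewrite ler_norml; apply/andP; split; lra.
Qed.

Lemma sum_decomp m s : `|\sum_(b <- s) Psi f m b - (m * size s)%:R * L - \sum_(b <- s) a_of b|
   <= (size s)%:R * eps K tau m.
Proof.
elim: s => [|b s IH]; first by rewrite !big_nil muln0 mul0r !subrr normr0 mul0r.
rewrite !big_cons /= mulnS natrD.
have h1 := a_bound b m.
have -> : Psi f m b + \sum_(j <- s) Psi f m j - (m%:R + (m * size s)%:R) * L -
    (a_of b + \sum_(j <- s) a_of j) =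
    (psi m b - a_of b) + (\sum_(j <- s) Psi f m j - (m * size s)%:R * L - \sum_(j <- s) a_of j).
  by rewrite /psi; ring.
apply: le_trans (ler_normD _ _) _.
by rewrite -natr1 mulrDl mul1r addrC; apply: lerD.
Qed.

Lemma Bw_unit s : Bw A s \in unitmx.
Proof.
elim: s => [|b s IH]; first by rewrite /Bw big_nil -idmxE unitmx1.
by rewrite /Bw big_cons -mulmxE unitmx_mul hAu IH.
Qed.

Lemma unit_opnorm_gt0 (M : 'M[R]_2) : M \in unitmx -> 0 < opnorm M.
Proof.
move=> hu; apply: opnorm_gt0; apply/eqP => h; move: hu.
by rewrite h unitmxE det0 unitr0.
Qed.

Lemma Bw_bound m s : `|ln (opnorm (Bw A s)) - \sum_(b <- s) a_of b|
   <= C + (size s)%:R * (2 * eps K tau m).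
Proof.
have h1 := H (xs m s) (size s * m.+1).
rewrite (wp_xs _ _ hA3) opnormZ normrX lnM ?posrE ?exprn_gt0 ?unit_opnorm_gt0 ?Bw_unit // lnXn // in h1.
have h2 := birk_xs f K tau K0 t0 t1 hf m s.
have h3 := sum_decomp m s.
rewrite -mulr_natl in h1.
move: h1 h2 h3; rewrite /L !ler_norml => /andP [a1 a2] /andP [b1 b2] /andP [c1 c2].
have -> : (size s)%:R * (2 * eps K tau m) = 2 * ((size s)%:R * eps K tau m) by ring.
set E := (size s)%:R * eps K tau m in b1 b2 c1 c2 *.
apply/andP; split; lra.
Qed.

Lemma Bw_bound' s : `|ln (opnorm (Bw A s)) - \sum_(b <- s) a_of b| <= C + 1.
Proof.
have tp : 0 < 1 - tau by rewrite subr_gt0.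
pose n : R := (size s)%:R.
have n0 : 0 <= n by rewrite /n ler0n.
have t0' : 0 <= tau := ltW t0.
have Kn : 0 < 2 * K * (n + 1) by rewrite mulr_gt0 ?mulr_gt0 ?ltr_wpDl ?ltr01.
have [m hm] := geo_small t0' t1 (divr_gt0 tp Kn).
apply: le_trans (Bw_bound m s) _; rewrite lerD2l -/n.
rewrite ltr_pdivlMr // in hm.
rewrite /eps exprS.
have nz : 1 - tau != 0 by rewrite subr_eq0 eq_sym lt_eqF.
have e : n * (2 * (K * (tau * tau ^+ m) / (1 - tau))) = (2 * n * K * tau ^+ m * tau) / (1 - tau).
  by field.
rewrite e ler_pdivrMr // mul1r.
have tm0 : 0 <= tau ^+ m := exprn_ge0 _ t0'.
have p : 0 <= 2 * K * tau ^+ m by rewrite !mulr_ge0 // ltW.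
have nt : n * tau <= n + 1 by nra.
have q : 2 * K * tau ^+ m * (n * tau) <= 2 * K * tau ^+ m * (n + 1) by apply: ler_wpM2l.
have r : tau ^+ m * (2 * K * (n + 1)) = 2 * K * tau ^+ m * (n + 1) by ring.
have s' : 2 * n * K * tau ^+ m * tau = 2 * K * tau ^+ m * (n * tau) by ring.
rewrite s'; apply: ltW; apply: le_lt_trans q _; rewrite -r; exact: hm.
Qed.

End Main.


Theorem lemma4p6 (R : realType) (A : 'I_3 -> 'M[R]_2) (c : R) :
  (forall k, A k \in unitmx) ->
  c != 0 -> A sym3 = c%:M ->
  irreducible_pair (A sym1) (A sym2) -> dominated_pair (A sym1) (A sym2) ->
  forall (f : (nat -> 'I_3) -> R), holder f ->
  forall C : R, 0 < C ->
  exists (i : nat -> 'I_3) (n : nat),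
    `| birkhoff f i n - ln (opnorm (word_prod A i n)) | > C.
Proof.
move=> hAu hc hA3 hirr [Kd [td [Kd0 [td0 [td1 hdom]]]]] f [K [tau [K0 [t0 [t1 hf]]]]] C C0.
apply: contrapT => hno.
have H : forall i n, `|birkhoff f i n - ln (opnorm (word_prod A i n))| <= C.
  move=> i n; rewrite leNgt; apply/negP => h; apply: hno; by exists i, n.
have BB := Bw_bound' A c f K tau C K0 t0 t1 C0 hf hA3 hc hAu H.
set a := a_of c f K tau.
set D := C + 1.
pose Bn (b : bool) := expR (- a b) *: A (symb b).
pose BWn (s : seq bool) := \prod_(b <- s) Bn b.
have BWn_eq : forall s, BWn s = expR (- \sum_(b <- s) a b) *: Bw A s.
  elim=> [|b s IH]; first by rewrite /BWn /Bw !big_nil oppr0 expR0 scale1r.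
  rewrite /BWn big_cons -/(BWn s) IH /Bn /Bw big_cons -scalerAl -scalerAr scalerA -expRD.
  by rewrite big_cons opprD.
have BWn_norm : forall s, opnorm (BWn s) = expR (ln (opnorm (Bw A s)) - \sum_(b <- s) a b).
  move=> s; rewrite BWn_eq opnormZ ger0_norm ?expR_ge0 // expRD lnK; first by rewrite mulrC.
  by rewrite posrE unit_opnorm_gt0 // Bw_unit.
set l := expR (- D); set u := expR D.
have Dp : 0 < D by rewrite /D; lra.
have l0 : 0 < l := expR_gt0 _.
have l1 : l <= 1 by rewrite /l expR_le1; lra.
have u1 : 1 <= u by rewrite /u -expR0 ler_expR; lra.
pose S (M : 'M[R]_2) := exists s : seq bool, s != [::] /\ M = BWn s.
have Sb : forall M, S M -> l <= opnorm M <= u.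
  move=> M [s [_ ->]]; rewrite BWn_norm /l /u !ler_expR -ler_norml; exact: BB.
have Smul : forall M N, S M -> S N -> S (M * N).
  move=> M N [s [sn ->]] [t [tn ->]]; exists (s ++ t); split.
    by case: s sn.
  by rewrite /BWn big_cat.
have SB : forall b, S (Bn b).
  by move=> b; exists [:: b]; split => //; rewrite /BWn big_cons big_nil mulr1.
have Spow : forall M, S M -> forall n, S (M ^+ n.+1).
  move=> M SM; elim=> [|n IH]; first by rewrite expr1.
  by rewrite exprS; apply: Smul.
have Bdet0 : forall b, \det (Bn b) != 0.
  move=> b; rewrite /Bn detZ mulf_neq0 ?expf_neq0 ?expR_eq0 //.
  by have := hAu (symb b); rewrite unitmxE unitfE.
have detlt : forall b, `|\det (Bn b)| < 1.
  move=> b; rewrite ltNge; apply/negP => hge.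
  set al := expR (- a b).
  have al0 : 0 < al := expR_gt0 _.
  have hd : forall n, `|\det (A (symb b) ^+ n)| / opnorm (A (symb b) ^+ n) ^+ 2 <= Kd * td ^+ n.
    move=> n; have := hdom n (fun _ => b) => /=.
    have -> : \prod_(k < n) (if b then A sym1 else A sym2) = A (symb b) ^+ n.
      by rewrite prodr_const card_ord /symb; case: (b).
    by [].
  have hZ : forall n, `|\det (Bn b)| ^+ n <= Kd * td ^+ n * u ^+ 2.
    move=> n.
    have un : opnorm (Bn b ^+ n) <= u.
      case: n => [|n]; first by rewrite expr0 opnorm1'.
      by case/andP: (Sb _ (Spow _ (SB b) n)).
    have pn : 0 < opnorm (A (symb b) ^+ n).
      apply: unit_opnorm_gt0; elim: n {un} => [|n IH]; first by rewrite expr0 -idmxE unitmx1.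
      by rewrite exprS -mulmxE unitmx_mul hAu IH.
    have e1 : Bn b ^+ n = al ^+ n *: A (symb b) ^+ n by rewrite /Bn exprZn.
    rewrite -normrX -detXn e1 detZ normrM normrX normrX (ger0_norm (ltW al0)).
    move: un; rewrite e1 opnormZ normrX (ger0_norm (ltW al0)) => un.
    have h := hd n; rewrite ler_pdivrMr ?exprn_gt0 // in h.
    have a2 : 0 <= (al ^+ n) ^+ 2 by exact: sqr_ge0.
    apply: le_trans (ler_wpM2l a2 h) _.
    have -> : (al ^+ n) ^+ 2 * (Kd * td ^+ n * opnorm (A (symb b) ^+ n) ^+ 2) =
      Kd * td ^+ n * (al ^+ n * opnorm (A (symb b) ^+ n)) ^+ 2 by ring.
    apply: ler_wpM2l; first by rewrite mulr_ge0 ?exprn_ge0 // ltW.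
    have g : 0 <= al ^+ n * opnorm (A (symb b) ^+ n).
      by apply: mulr_ge0; [apply: exprn_ge0; exact: ltW | exact: opnorm_ge0].
    by apply: lerXn2r; rewrite ?nnegrE //; apply: le_trans g un.
  have Ku : 0 < Kd * u ^+ 2.
    by apply: mulr_gt0 => //; apply: exprn_gt0; exact: lt_le_trans ltr01 u1.
  have Ki : 0 < (Kd * u ^+ 2)^-1 by rewrite invr_gt0.
  have [n hn] := geo_small (ltW td0) td1 Ki.
  have h1 := exprn_ege1 n hge.
  have h2 := hZ n.
  have hP : td ^+ n * (Kd * u ^+ 2) < 1 by rewrite -ltr_pdivlMr // div1r.
  have e : Kd * td ^+ n * u ^+ 2 = td ^+ n * (Kd * u ^+ 2) by ring.
  rewrite e in h2.
  by have := le_lt_trans (le_trans h1 h2) hP; rewrite ltxx.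
have [v [vnz [[al hX] [be hY]]]] :=
  final_alg S (Bn true) (Bn false) l u (SB true) (SB false) Smul l0 l1 u1 Sb (detlt true) (detlt false) (Bdet0 true).
apply: hirr; exists v; split => //; split.
- exists (expR (a true) * al).
  have -> : A sym1 = expR (a true) *: Bn true.
    by rewrite /Bn scalerA -expRD subrr expR0 scale1r.
  by rewrite -scalemxAl hX scalerA.
- exists (expR (a false) * be).
  have -> : A sym2 = expR (a false) *: Bn false.
    by rewrite /Bn scalerA -expRD subrr expR0 scale1r.
  by rewrite -scalemxAl hY scalerA.
Qed.
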